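(* Consider Algorithm B on an input whose optimal offline makespan is $1$. Then at most one job is handled by Step 4, and if some job is handled by Step 4, then every job arriving after it is handled by Step 2 or Step 3.
   Context: Model (two hierarchical machines with migration). Jobs $1,2,\dots,n$ arrive one by one. Job $j$ has a size $p_j>0$ and a grade of service (GoS) $g_j\in\{1,2\}$; a job of GoS $1$ may only be processed on machine $m_1$, a job of GoS $2$ on $m_1$ or $m_2$. When job $j$ arrives, the algorithm assigns it and may migrate previously arrived jobs of total size at most $M\cdot p_j$. Bin stretching: the optimal offline makespan of the complete input is $1$ and is known in advance. Notation: $Y_{j}$ is the set of jobs on $m_2$ just after job $j$ has been handled (including migrations), $y_j$ its total size, $y_0=0$. $p^{\max Y}_j$ and $p^{\max Y,2}_j$ are the largest and second largest sizes of jobs in $Y_{j-1}$ (each defined as $0$ if it does not exist), and $j^{\max Y}$ is a job of $Y_{j-1}$ of size $p^{\max Y}_j$. ''Sorted $Y_{j-1}$'' means the jobs of $Y_{j-1}$ listed in non-increasing order of size; $w_j$ denotes the total size of the set $W$ chosen when handling $j$. Algorithm B. On arrival of job $j$: Step 2: if $g_j=1$ or $y_{j-1}\ge 0.75$, assign $j$ to $m_1$. Step 3: else if $y_{j-1}+p_j\le 1.25$, assign $j$ to $m_2$. Step 4: else if $p_j\ge 0.75$: let $W$ be the longest prefix of sorted $Y_{j-1}$ with total size at most $0.75p_j$ (possibly empty). If $y_{j-1}-w_j+p_j>1.25$, assign $j$ to $m_1$ (no migration); otherwise migrate the jobs of $W$ to $m_1$ and assign $j$ to $m_2$. Step 5: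 else (so $p_j<0.75$): if $p_j+p^{\max Y}_j>1.25$, assign $j$ to $m_1$. Otherwise choose $W$ as follows: if $p^{\max Y}_j\ge y_{j-1}/2$, let $W=Y_{j-1}\setminus\{j^{\max Y}\}$; if $0.25\le p^{\max Y}_j<y_{j-1}/2$, let $W=\{j^{\max Y}\}$; if $p^{\max Y}_j<0.25$, let $W$ be the shortest prefix of sorted $Y_{j-1}$ with total size at least $0.25$ (or all of $Y_{j-1}$ if none exists), and if then $w_j>0.75p_j$ replace $W$ by $Y_{j-1}\setminus W$. Migrate the jobs of $W$ to $m_1$ and assign $j$ to $m_2$. *)

(* Defs.v *)
From HB Require Import structures.
From mathcomp Require Import all_boot all_order all_algebra.
Set Implicit Arguments. Unset Strict Implicit. Unset Printing Implicit Defensive.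
Import Order.TTheory GRing.Theory Num.Theory.
Local Open Scope ring_scope.

(* Jobs are numbered 0,1,...,n-1 (job j of the paper is job j-1 here).
   A job j has size [p j] and grade of service [g j] (1 or 2). *)

Section AlgB.
Variable R : realFieldType.
Variable p : nat -> R.

Definition tsize (Y : seq nat) : R := \sum_(i <- Y) p i.

Definition pmaxY (Y : seq nat) : R := \big[Num.max/0]_(i <- Y) p i.

Definition sorted_noninc (sY Y : seq nat) : Prop :=
  perm_eq sY Y /\ sorted (fun a b => p b <= p a) sY.

Definition longest_prefix_le (sY : seq nat) (b : R) (k : nat) : Prop :=
  (k <= size sY)%N /\ tsize (take k sY) <= b /\
  (forall k', (k < k' <= size sY)%N -> b < tsize (take k' sY)).

Definition shortest_prefix_ge (sY : seq nat) (b : R) (k : nat) : Prop :=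
  ((k <= size sY)%N /\ b <= tsize (take k sY) /\
     (forall k', (k' < k)%N -> tsize (take k' sY) < b))
  \/ ((forall k', (k' <= size sY)%N -> tsize (take k' sY) < b) /\ k = size sY).

Inductive stepB := Step2 | Step3 | Step4 | Step5.

(* [handlesB g Y j s Y']: with Y = Y_{j-1} the list of jobs on m_2,
   Algorithm B handles job j by Step s, and Y' = Y_j afterwards.
   This is a relation: it allows every possible tie-breaking
   (choice of sorted order, choice of j^{max Y}). *)
Definition handlesB (g : nat -> nat) (Y : seq nat) (j : nat) (s : stepB)
    (Y' : seq nat) : Prop :=
  let y := tsize Y in
  let c2 := (g j == 1%N) || (3 / 4 <= y) in
  match s with
  | Step2 => c2 /\ Y' = Y
  | Step3 => ~~ c2 /\ y + p j <= 5 / 4 /\ Y' = j :: Y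
  | Step4 => ~~ c2 /\ 5 / 4 < y + p j /\ 3 / 4 <= p j /\
      exists sY k, sorted_noninc sY Y /\ longest_prefix_le sY (3 / 4 * p j) k /\
        (if 5 / 4 < y - tsize (take k sY) + p j
         then Y' = Y                      (* j to m_1, no migration *)
         else Y' = j :: drop k sY)        (* W migrated to m_1, j to m_2 *)
  | Step5 => ~~ c2 /\ 5 / 4 < y + p j /\ p j < 3 / 4 /\
      let pm := pmaxY Y in
      (5 / 4 < p j + pm /\ Y' = Y)
      \/ (p j + pm <= 5 / 4 /\
          ((exists jm, jm \in Y /\ p jm = pm /\ y / 2 <= pm /\
                Y' = [:: j; jm])                       (* W = Y \ {jmax} *)
           \/ (exists jm, jm \in Y /\ p jm = pm /\ 1 / 4 <= pm /\ pm < y / 2 /\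
                Y' = j :: rem jm Y)                    (* W = {jmax} *)
           \/ (pm < 1 / 4 /\ exists sY k, sorted_noninc sY Y /\
                 shortest_prefix_ge sY (1 / 4) k /\
                 (if 3 / 4 * p j < tsize (take k sY)
                  then Y' = j :: take k sY             (* W replaced by Y \ W *)
                  else Y' = j :: drop k sY))))
  end.

Definition runB (n : nat) (g : nat -> nat) (Ys : nat -> seq nat)
    (st : nat -> stepB) : Prop :=
  Ys 0%N = [::] /\
  forall j, (j < n)%N -> handlesB g (Ys j) j (st j) (Ys j.+1).

(* offline schedules: a j = true means job j on m_1 *)
Definition feasible (n : nat) (g : nat -> nat) (a : nat -> bool) : Prop :=
  forall j, (j < n)%N -> g j = 1%N -> a j = true.

Definition makespan (n : nat) (a : nat -> bool) : R :=
  Num.max (\sum_(j < n | a j) p j) (\sum_(j < n | ~~ a j) p j).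

Definition opt_is_one (n : nat) (g : nat -> nat) : Prop :=
  (exists a, feasible n g a /\ makespan n a = 1) /\
  (forall a, feasible n g a -> 1 <= makespan n a).

End AlgB.

(* Main.v *)
Require Import Defs.
From mathcomp Require Import all_boot all_order all_algebra.
From mathcomp Require Import lra.
Import Order.TTheory GRing.Theory Num.Theory.
Local Open Scope ring_scope.

Section Proofs.
Variable R : realFieldType.
Variable n : nat.
Variable p : nat -> R.
Hypothesis ppos : forall j, (j < n)%N -> 0 < p j.

Lemma tsize_cons j Y : Defs.tsize p (j :: Y) = p j + Defs.tsize p Y.
Proof. by rewrite /Defs.tsize big_cons. Qed.

Lemma tsize_ge0 Y : all (fun x => x < n)%N Y -> 0 <= Defs.tsize p Y.
Proof.
move=> /allP H; rewrite /Defs.tsize big_seq; apply: sumr_ge0 => i /H hi.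
by rewrite le0r ppos ?orbT.
Qed.

Lemma tsize_le_total s : uniq s -> all (fun x => x < n)%N s ->
  Defs.tsize p s <= \sum_(j < n) p j.
Proof.
move=> us /allP alls.
rewrite -(big_mkord xpredT) (bigID (fun x => x \in s)) /=.
have -> : \sum_(0 <= i < n | i \in s) p i = Defs.tsize p s.
  rewrite /Defs.tsize -big_filter; apply: perm_big; apply: uniq_perm.
  - by rewrite filter_uniq // iota_uniq.
  - done.
  move=> x; rewrite mem_filter mem_index_iota /=; case xs: (x \in s) => //=.
  by rewrite alls.
rewrite lerDl big_seq_cond; apply: sumr_ge0 => i /andP[]; rewrite mem_index_iota.
move=> /andP[_ hi] _; by rewrite le0r ppos ?orbT.
Qed.

Lemma total_le2 g : opt_is_one p n g -> \sum_(j < n) p j <= 2.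
Proof.
move=> [[a [_ ma]] _]; rewrite (bigID (fun j : 'I_n => a j)) /=.
have h1 : \sum_(j < n | a j) p j <= 1 by rewrite -ma le_max lexx.
have h2 : \sum_(j < n | ~~ a j) p j <= 1 by rewrite -ma le_max lexx orbT.
lra.
Qed.

Lemma handles_shape g Y m s Y' : uniq Y -> handlesB p g Y m s Y' ->
  Y' = Y \/ exists Z, Y' = m :: Z /\ uniq Z /\ {subset Z <= Y}.
Proof.
move=> uY; case: s => /=.
- by case=> _ ->; left.
- by case=> _ [_ ->]; right; exists Y; split=> //; split.
- case=> _ [_ [_ [sY [k [[pe _] [_ H]]]]]]; case: ifP H => _ ->; first by left.
  right; exists (drop k sY); split=> //; split.
    by rewrite drop_uniq // (perm_uniq pe).
  by move=> x /mem_drop; rewrite (perm_mem pe).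
- case=> _ [_ [_ [[_ ->]|[_ [[jm [jin [_ [_ ->]]]]|[[jm [jin [_ [_ [_ ->]]]]]|
     [_ [sY [k [[pe _] [_ H]]]]]]]]]]]; first by left.
  + right; exists [:: jm]; split=> //; split=> // x; rewrite inE => /eqP ->.
    exact: jin.
  + right; exists (rem jm Y); split=> //; split; first exact: rem_uniq.
    by move=> x /mem_rem.
  + case: ifP H => _ ->; right.
      exists (take k sY); split=> //; split.
        by rewrite take_uniq // (perm_uniq pe).
      by move=> x /mem_take; rewrite (perm_mem pe).
    exists (drop k sY); split=> //; split.
      by rewrite drop_uniq // (perm_uniq pe).
    by move=> x /mem_drop; rewrite (perm_mem pe).
Qed.

Lemma inv_all g Ys st : runB p n g Ys st -> forall m, (m <= n)%N ->
  uniq (Ys m) /\ all (fun x => x < m)%N (Ys m).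
Proof.
move=> [H0 Hr]; elim=> [|m IH] hm; first by rewrite H0.
have [u a] := IH (ltnW hm).
case: (@handles_shape _ _ _ _ _ u (Hr m hm)) => [->|[Z [-> [uZ sZ]]]].
  by split=> //; apply/allP => x /(allP a) /ltnW.
split.
  rewrite /= uZ andbT; apply/negP => /sZ /(allP a); by rewrite ltnn.
rewrite /= ltnSn /=; apply/allP => x /sZ /(allP a) /ltnW //.
Qed.

End Proofs.

Theorem mainTheorem7 (R : realFieldType) (n : nat) (p : nat -> R)
    (g : nat -> nat) (Ys : nat -> seq nat) (st : nat -> stepB) :
  (forall j, (j < n)%N -> 0 < p j) ->
  (forall j, (j < n)%N -> g j = 1%N \/ g j = 2%N) ->
  opt_is_one p n g ->
  runB p n g Ys st ->
  (forall i k, (i < n)%N -> (k < n)%N -> st i = Step4 -> st k = Step4 -> i = k) /\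
  (forall i k, (i < k < n)%N -> st i = Step4 -> st k = Step2 \/ st k = Step3).
Proof.
move=> ppos _ opt run.
have tot := @total_le2 R n p g opt.
have G := @inv_all R n p g Ys st run.
have Hr := proj2 run.
have key : forall i k, (i < k < n)%N -> st i = Step4 -> st k = Step2 \/ st k = Step3.
  move=> i k /andP[ik kn] si.
  have iN : (i < n)%N := ltn_trans ik kn.
  have hi := Hr i iN; rewrite si /= in hi.
  case: hi => _ [h54 [h34 [sY [kk [[pe _] [_ HY]]]]]].
  pose Inv m := (uniq (i :: Ys m) /\ all (fun x => x < m)%N (Ys m) /\
                 5 / 4 < Defs.tsize p (Ys m) + p i) \/ 3 / 4 <= Defs.tsize p (Ys m).
  have base : Inv i.+1.
    have [ui ai] := G i (ltnW iN).
    case: ifP HY => _ HY; rewrite /Inv HY.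
      left; split.
        rewrite /= ui andbT; apply/negP => /(allP ai); by rewrite ltnn.
      by split=> //; apply/allP => x /(allP ai) /ltnW.
    right; rewrite tsize_cons.
    have : 0 <= Defs.tsize p (drop kk sY).
      apply: (@tsize_ge0 R n p ppos); apply/allP => x /mem_drop.
      rewrite (perm_mem pe) => /(allP ai) xi; exact: ltn_trans xi iN.
    lra.
  have step : forall m, (i < m < n)%N -> Inv m ->
      (st m = Step2 \/ st m = Step3) /\ Inv m.+1.
    move=> m /andP[im mn] [[u [a h]]|hB]; have hm := Hr m mn.
    - rewrite /Inv; case E: (st m) hm => /=.
      + case=> _ ->; split; first by left.
        left; split=> //; split=> //; apply/allP => x /(allP a) /ltnW //.
      + case=> _ [_ ->]; split; first by right.
        left; split.
          move: u => /= /andP[ni uY]; rewrite inE negb_or ni uY !andbT.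
          rewrite (ltn_eqF im) /=; apply/negP => /(allP a); by rewrite ltnn.
        split; first by rewrite /= ltnSn /=; apply/allP => x /(allP a) /ltnW.
        rewrite tsize_cons; have := ppos m mn; lra.
      + case=> _ [h5 _]; exfalso.
        have : Defs.tsize p (m :: i :: Ys m) <= \sum_(j < n) p j.
          apply: (@tsize_le_total R n p ppos).
            move: u => /= /andP[ni uY]; rewrite inE negb_or ni uY !andbT.
            rewrite eq_sym (ltn_eqF im) /=; apply/negP => /(allP a); by rewrite ltnn.
          rewrite /= mn iN /=; apply/allP => x /(allP a) xm; exact: ltn_trans xm mn.
        rewrite !tsize_cons; lra.
      + case=> _ [h5 _]; exfalso.
        have : Defs.tsize p (m :: i :: Ys m) <= \sum_(j < n) p j.
          apply: (@tsize_le_total R n p ppos).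
            move: u => /= /andP[ni uY]; rewrite inE negb_or ni uY !andbT.
            rewrite eq_sym (ltn_eqF im) /=; apply/negP => /(allP a); by rewrite ltnn.
          rewrite /= mn iN /=; apply/allP => x /(allP a) xm; exact: ltn_trans xm mn.
        rewrite !tsize_cons; lra.
    - rewrite /Inv; case E: (st m) hm => /=.
      + by case=> _ ->; split; [left | right].
      + by case=> /negP; rewrite hB orbT.
      + by case=> /negP; rewrite hB orbT.
      + by case=> /negP; rewrite hB orbT.
  have all_inv : forall m, (i < m <= n)%N -> Inv m.
    elim=> [|m IHm] /andP[im mn]; first by [].
    have [->|ne] := eqVneq m i; first exact: base.
    have im' : (i < m)%N by rewrite ltn_neqAle eq_sym ne -ltnS im.
    apply: (proj2 (step m _ (IHm _))); first by rewrite im' mn.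
    by rewrite im' ltnW.
  have Ik := all_inv k (introT andP (conj ik (ltnW kn))).
  apply: (proj1 (step k _ Ik)); by rewrite ik kn.
split=> //.
move=> i k iN kN si sk; case: (ltngtP i k) => // ik.
  by have := key i k (introT andP (conj ik kN)) si; rewrite sk; case.
by have := key k i (introT andP (conj ik iN)) sk; rewrite si; case.
Qed.
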